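(* Let $(V_0,V_1,V_2,V_3,w)$ be a geometric quintuple. Then for $w$ in a nonempty Zariski open subset $\mathcal{U}'$ (of the space of such tensors, up to the scaling action of $\mathbb{G}_m^4$), the linear map $\langle-,w\rangle\colon V_2^\vee\otimes V_3^\vee\to V_0\otimes V_1$ (contraction with $w$ in the last two factors) is an isomorphism, and hence $$\square_w=(V_0\otimes V_1,\,V_0,\,V_1,\,V_2^\vee,\,V_3^\vee,\,\mathrm{id},\,\phi_w),\qquad \phi_w=\langle-,w\rangle^{-1},$$ is a geometric square.
   Context: $k$ is algebraically closed of characteristic $0$. A quintuple $(V_0,V_1,V_2,V_3,W)$, with $V_i$ $2$-dimensional vector spaces and $0\neq W=kw\subset V_0\otimes V_1\otimes V_2\otimes V_3$, is geometric if for all $j\in\{0,1,2,3\}$ and all nonzero $\phi_j\in V_j^\vee$, $\phi_{j+1}\in V_{j+1}^\vee$ (indices mod 4), the contraction $\langle\phi_j\otimes\phi_{j+1},w\rangle$ is nonzero; the quintuple is identified with $w$. A geometric square is a septuple $(V,U_0^0,U_1^0,U_0^1,U_1^1,\phi_0,\phi_1)$ with $V$ a $4$-dimensional vector space, $U_i^j$ $2$-dimensional vector spaces and $\phi_i\colon V\to U_0^i\otimes U_1^i$ isomorphisms. *)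

(* Defs.v *)
From HB Require Import structures.
From mathcomp Require Import all_boot all_algebra.
From mathcomp Require Import mpoly.
Set Implicit Arguments. Unset Strict Implicit. Unset Printing Implicit Defensive.
Import GRing.Theory.
Local Open Scope ring_scope.

(* Coordinates: each V_i is identified with K^2 (basis e_0, e_1), so a tensor
   w in V_0 (x) V_1 (x) V_2 (x) V_3 is given by its 16 coordinates
   w a b c d (a index of V_0, ..., d index of V_3).  A linear form on V_i is a
   row vector phi : 'rV_2, acting by phi(e_a) = phi 0 a. *)
Definition tensor4 (K : Type) := 'I_2 -> 'I_2 -> 'I_2 -> 'I_2 -> K.

(* Geometric quintuple: for each j (mod 4) and nonzero phi_j in V_j^v,
   phi_{j+1} in V_{j+1}^v, the contraction <phi_j (x) phi_{j+1}, w>, an element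
   of V_{j+2} (x) V_{j+3}, is nonzero (i.e. has a nonzero coordinate). *)
Definition geometric (K : fieldType) (w : tensor4 K) : Prop :=
  forall phi psi : 'rV[K]_2, phi != 0 -> psi != 0 ->
  [/\ exists c d, \sum_a \sum_b phi 0 a * psi 0 b * w a b c d != 0,
      exists a d, \sum_b \sum_c phi 0 b * psi 0 c * w a b c d != 0,
      exists a b, \sum_c \sum_d phi 0 c * psi 0 d * w a b c d != 0 &
      exists b c, \sum_d \sum_a phi 0 d * psi 0 a * w a b c d != 0].

(* Index of the pair (x,y) in 'I_2 * 'I_2, identifying a tensor product of two
   2-dimensional spaces with K^4 (basis e_x (x) e_y at position 2x+y). *)
Definition pidx (x y : 'I_2) : 'I_4 := inord (2 * x + y).
Definition pfst (i : 'I_4) : 'I_2 := inord (i %/ 2).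
Definition psnd (i : 'I_4) : 'I_2 := inord (i %% 2).

(* The linear map <-, w> : V_2^v (x) V_3^v -> V_0 (x) V_1, acting on row
   vectors (coordinates in the bases e_c^v (x) e_d^v and e_a (x) e_b):
   (e_c^v (x) e_d^v) |-> sum_{a,b} w a b c d e_a (x) e_b. *)
Definition contr_mx (K : fieldType) (w : tensor4 K) : 'M[K]_4 :=
  \matrix_(i < 4, j < 4) w (pfst j) (psnd j) (pfst i) (psnd i).

(* A geometric square (V, U_0^0, U_1^0, U_0^1, U_1^1, phi_0, phi_1) with all
   spaces given in coordinates (V = K^4, U_i^j = K^2, U_0^i (x) U_1^i = K^4):
   phi_0 and phi_1 are isomorphisms V -> U_0^i (x) U_1^i. *)
Definition geometric_square (K : fieldType) (phi0 phi1 : 'M[K]_4) : Prop :=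
  phi0 \in unitmx /\ phi1 \in unitmx.

Definition tcoord (K : Type) (w : tensor4 K) : 'I_16 -> K :=
  fun i => w (inord (i %/ 8 %% 2)) (inord (i %/ 4 %% 2))
             (inord (i %/ 2 %% 2)) (inord (i %% 2)).

Definition zariski_open (K : fieldType) (n : nat) (U : ('I_n -> K) -> Prop) :=
  exists S : seq {mpoly K[n]},
    forall x, U x <-> exists2 p, p \in S & p.@[x] != 0.

(* Main.v *)
Require Import Defs.
From HB Require Import structures.
From mathcomp Require Import all_boot all_algebra.
From mathcomp Require Import mpoly.
From mathcomp Require Import zify ring.
Import GRing.Theory.
Local Open Scope ring_scope.

Section Aux.
Variable K : closedFieldType.

Definition w0 : tensor4 K := fun a b c d => (a == c)%:R * (b == d)%:R.

Lemma sum1 (f : 'I_2 -> K) x : \sum_a f a * (a == x)%:R = f x.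
Proof.
rewrite (bigD1 x) //= eqxx mulr1 big1 ?addr0 // => a ha.
by rewrite (negbTE ha) mulr0.
Qed.

Lemma sum2 (g : 'I_2 -> 'I_2 -> K) x y :
  \sum_a \sum_b g a b * ((a == x)%:R * (b == y)%:R) = g x y.
Proof.
rewrite -(sum1 (fun a => g a y) x); apply: eq_bigr => a _.
rewrite -(sum1 (fun b => g a b) y) big_distrl /=; apply: eq_bigr => b _; ring.
Qed.

Lemma nz_row (phi : 'rV[K]_2) : phi != 0 -> exists c, phi 0 c != 0.
Proof.
move=> H; apply/existsP; apply: contraR H => /existsPn H.
apply/eqP/rowP => j; rewrite !mxE; exact/eqP/negPn/H.
Qed.

Lemma geom_w0 : geometric w0.
Proof.
move=> phi psi /nz_row [x Hx] /nz_row [y Hy].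
have Hp : phi 0 x * psi 0 y != 0 by rewrite mulf_neq0.
split.
- exists x, y; move: Hp; rewrite -(sum2 (fun a b => phi 0 a * psi 0 b)).
  apply: contra => /eqP h; apply/eqP; apply: etrans h; apply: eq_bigr => b _; apply: eq_bigr => c _.
  by rewrite /w0.
- exists y, x; move: Hp; rewrite -(sum2 (fun a b => phi 0 a * psi 0 b)).
  apply: contra => /eqP h; apply/eqP; apply: etrans h; apply: eq_bigr => b _; apply: eq_bigr => c _.
  by rewrite /w0 (eq_sym y c); ring.
- exists x, y; move: Hp; rewrite -(sum2 (fun a b => phi 0 a * psi 0 b)).
  apply: contra => /eqP h; apply/eqP; apply: etrans h; apply: eq_bigr => b _; apply: eq_bigr => c _.
  by rewrite /w0 (eq_sym x b) (eq_sym y c).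
- exists x, y; move: Hp; rewrite -(sum2 (fun a b => phi 0 a * psi 0 b)).
  apply: contra => /eqP h; apply/eqP; apply: etrans h; apply: eq_bigr => b _; apply: eq_bigr => c _.
  by rewrite /w0 (eq_sym x b); ring.
Qed.

Lemma contr_w0 : contr_mx w0 = 1%:M.
Proof.
apply/matrixP => i j; rewrite !mxE /w0.
have -> : (i == j) = ((pfst j == pfst i) && (psnd j == psnd i)).
  apply/idP/idP; first by move/eqP ->; rewrite !eqxx.
  case/andP => /eqP h1 /eqP h2; apply/eqP/val_inj.
  move: h1 h2; rewrite /pfst /psnd => /(congr1 (@nat_of_ord 2)) h1 /(congr1 (@nat_of_ord 2)) h2.
  have hi := ltn_ord i; have hj := ltn_ord j.
  move: h1 h2; rewrite !inordK /=; try lia.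
by case: (pfst j == pfst i); case: (psnd j == psnd i); rewrite ?mulr1 ?mulr0.
Qed.

Definition kidx (i j : 'I_4) : 'I_16 := inord (4 * j + i).

Definition detpoly : {mpoly K[16]} := \det (\matrix_(i, j) 'X_(kidx i j)).

Lemma detpolyE (w : tensor4 K) : detpoly.@[tcoord w] = \det (contr_mx w).
Proof.
rewrite /detpoly -det_map_mx; congr (\det _); apply/matrixP => i j.
rewrite [LHS]mxE /= !mxE mevalXU /tcoord /kidx /pfst /psnd.
have hi := ltn_ord i; have hj := ltn_ord j.
rewrite inordK; last by lia.
congr (w _ _ _ _); apply: val_inj; rewrite /= !inordK //; lia.
Qed.

End Aux.

Theorem proposition3p13 (K : closedFieldType) (hK : [pchar K] =i pred0) :
  exists U : ('I_16 -> K) -> Prop,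
    zariski_open U /\
    (exists w : tensor4 K, geometric w /\ U (tcoord w)) /\
    (forall w : tensor4 K, geometric w -> U (tcoord w) ->
       contr_mx w \in unitmx /\
       geometric_square 1%:M (invmx (contr_mx w))).
Proof.
exists (fun x => (@detpoly K).@[x] != 0); split.
  exists [:: @detpoly K] => x; split; first by move=> h; exists (@detpoly K); rewrite ?mem_seq1.
  by case=> p; rewrite mem_seq1 => /eqP ->.
split.
  exists (@w0 K); split; first exact: geom_w0.
  by rewrite detpolyE contr_w0 det1 oner_neq0.
move=> w _; rewrite detpolyE => hd.
have hu : contr_mx w \in unitmx by rewrite unitmxE unitfE.
split=> //; split; first exact: unitmx1.
by rewrite unitmx_inv.
Qed.
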